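(* For $w\in[0,1]$, $\delta\in\{0,1\}$ and $p\in(0,1)$, let $l(w,\delta,p)=(1-wp)^{1-\delta}$ and $\tilde l(w,\delta,p)=(1-p)^{w(1-\delta)}$, and let $d(w,\delta,p)=|l(w,\delta,p)-\tilde l(w,\delta,p)|$. Then for all such $w,\delta,p$, \[ d(w,\delta,p)\le (1-\beta p)-(1-p)^{\beta},\qquad\text{where } \beta=\frac{\log\{-p/\log(1-p)\}}{\log(1-p)}. \] In particular, for any $p\in(0,0.4]$ and all $w\in[0,1]$, $\delta\in\{0,1\}$, one has $d(w,\delta,p)<0.0255$.
   Context: This arises in a dose-finding likelihood: $p$ is the toxicity probability at a dose, $\delta$ indicates whether a patient's binary toxicity outcome has been ascertained ($\delta=1$) or is still pending ($\delta=0$), and $w$ is a weight in $[0,1]$ equal to the probability that a patient who will eventually experience toxicity has already experienced it by the current follow-up time. The factor $(1-wp)^{1-\delta}$ is the exact likelihood contribution of a pending patient and $(1-p)^{w(1-\delta)}$ is its approximation. *)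

(* Defs.v *)
From Stdlib Require Import Reals.
Open Scope R_scope.

Definition lik (w delta p : R) : R := Rpower (1 - w * p) (1 - delta).

Definition lik_approx (w delta p : R) : R := Rpower (1 - p) (w * (1 - delta)).

Definition dist_lik (w delta p : R) : R := Rabs (lik w delta p - lik_approx w delta p).

Definition beta (p : R) : R := ln (- p / ln (1 - p)) / ln (1 - p).

(* Main.v *)
Require Import Defs.
From Stdlib Require Import Reals Lra Psatz.
From Coquelicot Require Import Coquelicot.
Open Scope R_scope.

Lemma tangent (x c : R) : exp c * (1 + x - c) <= exp x.
Proof.
  replace (exp x) with (exp c * exp (x - c)).
  - apply Rmult_le_compat_l; [apply Rlt_le, exp_pos|].
    pose proof (exp_ineq1_le (x - c)); lra.
  - rewrite <- exp_plus; f_equal; ring.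
Qed.

Lemma bern (w L : R) : 0 <= w <= 1 -> exp (w * L) <= w * exp L + (1 - w).
Proof.
  intros Hw.
  pose proof (tangent L (w * L)) as H1.
  pose proof (tangent 0 (w * L)) as H2. rewrite exp_0 in H2.
  pose proof (exp_pos (w * L)).
  nra.
Qed.

Lemma mono0 (F f : R -> R) :
  (forall x, is_derive F x (f x)) -> (forall x, x <= 0 -> 0 <= f x) ->
  forall x, x <= 0 -> F x <= F 0.
Proof.
  intros HD Hf x Hx.
  destruct (Req_dec x 0) as [->|Hx0]; [lra|].
  destruct (Rle_dec (F x) (F 0)) as [|Hc]; [assumption|].
  exfalso.
  set (eps := (F x - F 0) / (-2 * x)).
  assert (Heps : 0 < eps).
  { unfold eps; apply Rdiv_lt_0_compat; lra. }
  assert (Hlt : F x + eps * x < F 0 + eps * 0).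
  { apply (incr_function_le (fun t => F t + eps * t) (Finite x) (Finite 0)
             (fun t => f t + eps)); simpl; try lra.
    - intros t _ _.
      apply (is_derive_plus F (fun t => eps * t)); [apply HD|].
      auto_derive; [easy|ring].
    - intros t _ Ht. pose proof (Hf t Ht). lra. }
  assert (eps * x = - (F x - F 0) / 2).
  { unfold eps; field; lra. }
  lra.
Qed.

Lemma g0 y : y <= 0 -> exp y <= 1.
Proof.
  intros Hy. rewrite <- exp_0.
  apply (mono0 exp exp); auto.
  - intros x. auto_derive; [easy|ring].
  - intros x _; apply Rlt_le, exp_pos.
Qed.

Ltac chain F f prev :=
  intros y Hy;
  let H := fresh in
  assert (H := mono0 F f);
  simpl in H;
  assert (Hd : forall x, is_derive F x (f x)) by (intros x; auto_derive; try easy; try field);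
  specialize (H Hd); clear Hd;
  assert (Hs : forall x, x <= 0 -> 0 <= f x) by (intros x Hx; pose proof (prev x Hx); lra);
  specialize (H Hs y Hy); rewrite exp_0 in H; lra.

Lemma g1 y : y <= 0 -> 1 + y <= exp y.
Proof.
  revert y.
  chain (fun y => -(exp y - (1 + y))) (fun y => -(exp y - 1)) g0.
Qed.

Lemma g2 y : y <= 0 -> exp y <= 1 + y + y^2/2.
Proof.
  revert y.
  chain (fun y => exp y - (1 + y + y^2/2)) (fun y => exp y - (1 + y)) g1.
Qed.

Lemma g3 y : y <= 0 -> 1 + y + y^2/2 + y^3/6 <= exp y.
Proof.
  revert y.
  chain (fun y => -(exp y - (1 + y + y^2/2 + y^3/6))) (fun y => -(exp y - (1 + y + y^2/2))) g2.
Qed.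

Lemma g4 y : y <= 0 -> exp y <= 1 + y + y^2/2 + y^3/6 + y^4/24.
Proof.
  revert y.
  chain (fun y => exp y - (1 + y + y^2/2 + y^3/6 + y^4/24)) (fun y => exp y - (1 + y + y^2/2 + y^3/6)) g3.
Qed.

Lemma g5 y : y <= 0 -> 1 + y + y^2/2 + y^3/6 + y^4/24 + y^5/120 <= exp y.
Proof.
  revert y.
  chain (fun y => -(exp y - (1 + y + y^2/2 + y^3/6 + y^4/24 + y^5/120)))
        (fun y => -(exp y - (1 + y + y^2/2 + y^3/6 + y^4/24))) g4.
Qed.

Lemma g6 y : y <= 0 -> exp y <= 1 + y + y^2/2 + y^3/6 + y^4/24 + y^5/120 + y^6/720.
Proof.
  revert y.
  chain (fun y => exp y - (1 + y + y^2/2 + y^3/6 + y^4/24 + y^5/120 + y^6/720))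
        (fun y => exp y - (1 + y + y^2/2 + y^3/6 + y^4/24 + y^5/120)) g5.
Qed.

Lemma ln_r : ln (783/1000) <= -24462/100000.
Proof.
  rewrite <- (ln_exp (-24462/100000)).
  apply ln_le; [lra|].
  pose proof (g5 (-24462/100000)). simpl in H. lra.
Qed.

Lemma ln_06 : -5109/10000 <= ln (1 - 2/5).
Proof.
  rewrite <- (ln_exp (-5109/10000)).
  apply ln_le; [apply exp_pos|].
  pose proof (g6 (-5109/10000)). simpl in H. lra.
Qed.

Lemma exp_le_exp x y : x <= y -> exp x <= exp y.
Proof.
  intros H. destruct (Rle_lt_or_eq_dec x y H) as [H' | ->].
  - apply Rlt_le, exp_increasing, H'.
  - lra.
Qed.

Lemma Lneg p : 0 < p < 1 -> ln (1 - p) < 0.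
Proof. intros Hp. rewrite <- ln_1. apply ln_increasing; lra. Qed.

Lemma core1 p w : 0 < p < 1 ->
  1 - w * p - exp (w * ln (1 - p)) <= (1 - beta p * p) - Rpower (1 - p) (beta p).
Proof.
  intros Hp. pose proof (Lneg p Hp) as HL.
  set (L := ln (1 - p)) in *.
  assert (HE : Rpower (1 - p) (beta p) = - p / L).
  { unfold Rpower, beta. fold L.
    replace (ln (- p / L) / L * L) with (ln (- p / L)) by (field; lra).
    apply exp_ln. apply Rdiv_neg_neg; lra. }
  rewrite HE.
  pose proof (tangent (w * L) (beta p * L)) as T.
  assert (HE2 : exp (beta p * L) = - p / L) by (rewrite <- HE; reflexivity).
  rewrite HE2 in T.
  replace (- p / L * (1 + w * L - beta p * L)) with (- p / L - p * w + p * beta p) in T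
    by (field; lra).
  lra.
Qed.

Lemma nonneg p w : 0 < p < 1 -> 0 <= w <= 1 -> 0 <= 1 - w * p - exp (w * ln (1 - p)).
Proof.
  intros Hp Hw. pose proof (bern w (ln (1 - p)) Hw). rewrite exp_ln in H; lra.
Qed.

Lemma dist0 w p : 0 < p < 1 -> 0 <= w <= 1 ->
  dist_lik w 0 p = 1 - w * p - exp (w * ln (1 - p)).
Proof.
  intros Hp Hw. unfold dist_lik, lik, lik_approx.
  rewrite Rminus_0_r, Rmult_1_r, Rpower_1 by nra.
  unfold Rpower. rewrite Rabs_right. reflexivity.
  pose proof (nonneg p w Hp Hw); lra.
Qed.

Lemma dist1 w p : 0 < p < 1 -> 0 <= w <= 1 -> dist_lik w 1 p = 0.
Proof.
  intros Hp Hw. unfold dist_lik, lik, lik_approx.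
  replace (1 - 1) with 0 by ring. rewrite Rmult_0_r, !Rpower_O by nra.
  rewrite Rminus_diag_eq, Rabs_R0; reflexivity.
Qed.

Lemma monop p q w : 0 < p <= q -> q < 1 -> 0 <= w <= 1 ->
  1 - w * p - exp (w * ln (1 - p)) <= 1 - w * q - exp (w * ln (1 - q)).
Proof.
  intros Hp Hq Hw.
  set (La := ln (1 - q)). set (Lb := ln (1 - p)).
  assert (HLab : La <= Lb) by (apply ln_le; lra).
  assert (HLb : Lb <= 0) by (pose proof (Lneg p ltac:(lra)); unfold Lb; lra).
  set (s := exp (La - Lb)).
  set (E := exp (w * Lb)).
  assert (Hsb : s * (1 - p) = 1 - q).
  { unfold s. rewrite <- (exp_ln (1 - p)) by lra. rewrite <- exp_plus.
    replace (La - Lb + ln (1 - p)) with La by (unfold Lb; ring). apply exp_ln; lra. }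
  assert (Hs1 : s <= 1) by (unfold s; rewrite <- exp_0; apply exp_le_exp; lra).
  assert (HEb : 1 - p <= E).
  { unfold E. rewrite <- (exp_ln (1 - p)) by lra. apply exp_le_exp. fold Lb. nra. }
  assert (HA : exp (w * La) = E * exp (w * (La - Lb))).
  { unfold E; rewrite <- exp_plus; f_equal; ring. }
  pose proof (bern w (La - Lb) Hw) as HB. fold s in HB.
  assert (HEpos : 0 < E) by apply exp_pos.
  assert (exp (w * La) <= E * (w * s + (1 - w))) by (rewrite HA; apply Rmult_le_compat_l; lra).
  assert (E * (s - 1) * w <= (1 - p) * (s - 1) * w) by
    (apply Rmult_le_compat_r; [lra|]; nra).
  nra.
Qed.

Lemma core2 w : 0 <= w <= 1 -> 1 - w * (2/5) - exp (w * ln (1 - 2/5)) < 255/10000.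
Proof.
  intros Hw.
  pose proof (tangent (w * ln (1 - 2/5)) (ln (783/1000))) as T.
  rewrite exp_ln in T by lra.
  pose proof ln_r. pose proof ln_06.
  assert (w * (ln (1 - 2/5) - -5109/10000) >= 0) by nra.
  nra.
Qed.

Theorem theorem1 :
  (forall w delta p : R,
      0 <= w <= 1 -> (delta = 0 \/ delta = 1) -> 0 < p < 1 ->
      dist_lik w delta p <= (1 - beta p * p) - Rpower (1 - p) (beta p))
  /\
  (forall w delta p : R,
      0 <= w <= 1 -> (delta = 0 \/ delta = 1) -> 0 < p <= 2 / 5 ->
      dist_lik w delta p < 255 / 10000).
Proof.
  split.
  - intros w delta p Hw [-> | ->] Hp.
    + rewrite dist0 by assumption. apply core1; assumption.
    + rewrite dist1 by assumption.
      pose proof (core1 p 0 Hp). rewrite !Rmult_0_l, exp_0 in H. lra.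
  - intros w delta p Hw [-> | ->] Hp.
    + rewrite dist0 by (assumption || lra).
      pose proof (monop p (2/5) w Hp ltac:(lra) Hw).
      pose proof (core2 w Hw). lra.
    + rewrite dist1 by (assumption || lra). lra.
Qed.
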